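(* Let $D$ be a locally finite connected C-homogeneous digraph and let $x\in VD$. If $N^+(x)$ or $N^-(x)$ consists of precisely one vertex, then $D$ is either an infinite tree or a directed cycle.
   Context: A digraph has an irreflexive, antisymmetric edge relation; connectedness, local finiteness and being a tree refer to the underlying undirected graph. $D$ is C-homogeneous if every isomorphism between finite connected induced subdigraphs extends to an automorphism of $D$. $N^+(x)=\{y: xy\in ED\}$, $N^-(x)=\{y: yx\in ED\}$. *)

(* Defs.v *)
From Stdlib Require Import List Arith Relations.
Import ListNotations.

Section Digraph.
Set Implicit Arguments.
Context {V : Type}.
Variable E : V -> V -> Prop.

Definition is_digraph : Prop :=
  (forall x, ~ E x x) /\ (forall x y, E x y -> E y x -> x = y).

Definition adj (x y : V) : Prop := E x y \/ E y x.

Definition finite_set (A : V -> Prop) : Prop :=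
  exists l : list V, forall x, A x -> In x l.

Definition infinite_vertices : Prop := ~ finite_set (fun _ => True).

Definition locally_finite : Prop :=
  forall x, finite_set (fun y => adj x y).

Definition adj_in (A : V -> Prop) (x y : V) : Prop := A x /\ A y /\ adj x y.

Definition connected_in (A : V -> Prop) : Prop :=
  forall a b, A a -> A b -> clos_refl_trans V (adj_in A) a b.

Definition connected : Prop := connected_in (fun _ => True).

Definition out_nbh (x : V) : V -> Prop := fun y => E x y.
Definition in_nbh (x : V) : V -> Prop := fun y => E y x.

Definition singleton_set (S : V -> Prop) : Prop :=
  exists y, forall z, S z <-> z = y.

(* f restricted to A is an isomorphism of induced subdigraphs D[A] -> D[B] *)
Definition induced_iso (A B : V -> Prop) (f : V -> V) : Prop :=
  (forall a, A a -> B (f a)) /\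
  (forall a a', A a -> A a' -> f a = f a' -> a = a') /\
  (forall b, B b -> exists a, A a /\ f a = b) /\
  (forall a a', A a -> A a' -> (E a a' <-> E (f a) (f a'))).

Definition automorphism (g : V -> V) : Prop :=
  (forall x y, g x = g y -> x = y) /\
  (forall y, exists x, g x = y) /\
  (forall x y, E x y <-> E (g x) (g y)).

Definition C_homogeneous : Prop :=
  forall (A B : V -> Prop) (f : V -> V),
    finite_set A -> finite_set B -> connected_in A -> connected_in B ->
    induced_iso A B f ->
    exists g, automorphism g /\ forall a, A a -> g a = f a.

Definition undirected_cycle (l : list V) : Prop :=
  3 <= length l /\ NoDup l /\
  (forall i, S i < length l ->
     exists u w, nth_error l i = Some u /\ nth_error l (S i) = Some w /\ adj u w) /\
  (exists u w, hd_error l = Some u /\ nth_error l (length l - 1) = Some w /\ adj w u).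

Definition is_tree : Prop := connected /\ forall l, ~ undirected_cycle l.

Definition directed_cycle : Prop :=
  exists (n : nat) (f : nat -> V),
    3 <= n /\
    (forall i j, i < n -> j < n -> f i = f j -> i = j) /\
    (forall v, exists i, i < n /\ f i = v) /\
    (forall x y, E x y <-> exists i, i < n /\ x = f i /\ y = f ((S i) mod n)).

End Digraph.

(* Main.v *)
Require Import Defs.
From Stdlib Require Import List Arith Lia Relations Classical ClassicalEpsilon FinFun.
Import ListNotations.

Lemma iter_add {A} (f : A -> A) a b x : Nat.iter (a + b) f x = Nat.iter a f (Nat.iter b f x).
Proof. induction a; simpl; congruence. Qed.

Lemma min_ex (P : nat -> Prop) n : P n -> exists m, P m /\ forall j, P j -> m <= j.
Proof.
  induction n as [n IH] using (well_founded_induction lt_wf). intros Hn.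
  destruct (classic (exists j, j < n /\ P j)) as [[j [Hj Pj]]|Hno].
  - exact (IH j Hj Pj).
  - exists n; split; auto. intros j Pj. destruct (le_lt_dec n j); auto. exfalso; eauto.
Qed.

Lemma crt_cross {A} (R : A -> A -> Prop) (P : A -> Prop) a b :
  clos_refl_trans A R a b -> P a -> ~ P b -> exists x y, R x y /\ P x /\ ~ P y.
Proof.
  intros H. apply clos_rt_rt1n in H. induction H as [|a y b Ry _ IH]; intros Pa Pb.
  - contradiction.
  - destruct (classic (P y)) as [Py|Py]; eauto.
Qed.

Section Func.
Variables (V : Type) (E : V -> V -> Prop) (s : V -> V).
Hypothesis Hirr : forall x, ~ E x x.
Hypothesis Hanti : forall x y, E x y -> E y x -> x = y.
Hypothesis Hs : forall x y, E x y <-> y = s x.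

Lemma Es x : E x (s x). Proof. apply Hs; reflexivity. Qed.
Lemma Eeq x y : E x y -> y = s x. Proof. apply Hs. Qed.

Definition periodic := exists v k, 0 < k /\ Nat.iter k s v = v.

Lemma rep_periodic x i j : i < j -> Nat.iter i s x = Nat.iter j s x -> periodic.
Proof.
  intros Hij H. exists (Nat.iter i s x), (j - i). split; [lia|].
  rewrite <- iter_add. replace (j - i + i) with j by lia. auto.
Qed.

Lemma cyc_core (m : nat) (a : nat -> V) : 3 <= m ->
  (forall i j, i < m -> j < m -> a i = a j -> i = j) ->
  (forall i, S i < m -> adj E (a i) (a (S i))) ->
  adj E (a (m-1)) (a 0) -> periodic.
Proof.
  intros Hm Hinj Hadj Hcl. destruct Hcl as [F|B].
  - assert (Hfm2 : E (a (m-2)) (a (S (m-2)))).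
    { destruct (Hadj (m-2)) as [H|H]; [lia|exact H|].
      exfalso. replace (S (m-2)) with (m-1) in H by lia.
      apply Eeq in H. apply Eeq in F. rewrite <- F in H.
      apply Hinj in H; lia. }
    assert (Hfw : forall d, d <= m-2 -> E (a (m-2-d)) (a (S (m-2-d)))).
    { induction d; intros Hd.
      - replace (m-2-0) with (m-2) by lia. exact Hfm2.
      - specialize (IHd ltac:(lia)).
        replace (m-2-d) with (S (m-2-S d)) in IHd by lia.
        set (i := m-2-S d) in *.
        destruct (Hadj i) as [H|H]; [lia|exact H|].
        exfalso. apply Eeq in H. apply Eeq in IHd. rewrite <- IHd in H.
        apply Hinj in H; lia. }
    assert (Hf : forall i, i < m-1 -> E (a i) (a (S i))).
    { intros i Hi. specialize (Hfw (m-2-i) ltac:(lia)).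
      replace (m-2-(m-2-i)) with i in Hfw by lia. exact Hfw. }
    assert (Hit : forall j, j <= m-1 -> Nat.iter j s (a 0) = a j).
    { induction j; intros Hj; [reflexivity|]. simpl. rewrite IHj by lia.
      symmetry. apply Eeq, Hf. lia. }
    exists (a 0), m. split; [lia|].
    assert (H : Nat.iter (S (m-1)) s (a 0) = a 0).
    { simpl. rewrite Hit by lia. symmetry. apply Eeq, F. }
    replace (S (m-1)) with m in H by lia. exact H.
  - assert (H0 : E (a 1) (a 0)).
    { destruct (Hadj 0) as [H|H]; [lia| |exact H].
      exfalso. apply Eeq in H. apply Eeq in B. rewrite <- B in H.
      apply Hinj in H; lia. }
    assert (Hbw : forall i, S i < m -> E (a (S i)) (a i)).
    { induction i; intros Hi; [exact H0|].
      specialize (IHi ltac:(lia)).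
      destruct (Hadj (S i)) as [H|H]; [lia| |exact H].
      exfalso. apply Eeq in H. apply Eeq in IHi. rewrite <- IHi in H.
      apply Hinj in H; lia. }
    assert (Hit : forall j, j <= m-1 -> Nat.iter j s (a (m-1)) = a (m-1-j)).
    { induction j; intros Hj; [simpl; rewrite Nat.sub_0_r; reflexivity|]. simpl. rewrite IHj by lia.
      specialize (Hbw (m-1-S j) ltac:(lia)).
      replace (S (m-1-S j)) with (m-1-j) in Hbw by lia.
      symmetry. apply Eeq, Hbw. }
    exists (a (m-1)), m. split; [lia|].
    assert (H : Nat.iter (S (m-1)) s (a (m-1)) = a (m-1)).
    { simpl. rewrite Hit by lia. replace (m-1-(m-1)) with 0 by lia.
      symmetry. apply Eeq, B. }
    replace (S (m-1)) with m in H by lia. exact H.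
Qed.

Lemma cycle_periodic l : undirected_cycle E l -> periodic.
Proof.
  intros [Hlen [Hnd [Hcons [u0 [w0 [Hhd [Hlast Hadj]]]]]]].
  destruct l as [|d l']; [simpl in Hlen; lia|].
  set (l := d :: l') in *.
  apply (cyc_core (length l) (fun i => nth i l d)); auto.
  - intros i j Hi Hj. apply (proj1 (NoDup_nth l d) Hnd); auto.
  - intros i Hi. destruct (Hcons i Hi) as [u [w [Hu [Hw Huw]]]].
    rewrite (nth_error_nth _ _ d Hu), (nth_error_nth _ _ d Hw). exact Huw.
  - rewrite (nth_error_nth _ _ d Hlast). simpl in Hhd. injection Hhd as <-.
    exact Hadj.
Qed.

Lemma aut_comm g : automorphism E g -> forall j z, g (Nat.iter j s z) = Nat.iter j s (g z).
Proof.
  intros [_ [_ Hg]] j. induction j; intros z; [reflexivity|]. simpl.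
  rewrite <- IHj. apply Eeq, (proj1 (Hg _ _)), Es.
Qed.

Lemma periodic_cycle : connected E -> C_homogeneous E -> periodic -> directed_cycle E.
Proof.
  intros Hconn HC [v [k0 [Hk0 Hv0]]].
  destruct (min_ex (fun k => 0 < k /\ Nat.iter k s v = v) k0) as [k [[Hk Hv] Hmin]]; auto.
  assert (Hmod : forall q, Nat.iter (q*k) s v = v).
  { induction q; [reflexivity|]. replace (S q * k) with (k + q*k) by lia.
    rewrite iter_add, IHq. exact Hv. }
  assert (Hred : forall i, Nat.iter i s v = Nat.iter (i mod k) s v).
  { intros i. assert (Hi := Nat.div_mod_eq i k).
    transitivity (Nat.iter (i mod k + (i/k)*k) s v); [f_equal; lia|].
    rewrite iter_add, Hmod. reflexivity. }
  assert (Hk3 : 3 <= k).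
  { destruct k as [|[|[|k']]]; try lia; exfalso.
    - simpl in Hv. apply (Hirr v). rewrite <- Hv at 2. apply Es.
    - simpl in Hv. assert (H1 := Es v). assert (H2 := Es (s v)). rewrite Hv in H2.
      assert (Hvv := Hanti _ _ H1 H2). apply (Hirr v). rewrite Hvv at 2. apply Es. }
  assert (Hinj0 : forall i j, i < j -> j < k -> Nat.iter i s v = Nat.iter j s v -> False).
  { intros i j Hij Hj H.
    assert (H' : Nat.iter (k - j) s (Nat.iter i s v) = Nat.iter (k-j) s (Nat.iter j s v))
      by (rewrite H; reflexivity).
    rewrite <- !iter_add in H'. replace (k - j + j) with k in H' by lia.
    rewrite Hv in H'. assert (Hp : 0 < k - j + i) by lia; specialize (Hmin (k - j + i) (conj Hp H')). lia. }
  assert (Hall : forall w, exists i, w = Nat.iter i s v).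
  { intros w. apply NNPP; intro Hw.
    set (C := fun y => exists i, y = Nat.iter i s v).
    destruct (crt_cross _ C v w (Hconn v w I I)) as [x [y [[_ [_ Hxy]] [[i Hx] Hy]]]].
    { exists 0; reflexivity. } { exact Hw. }
    destruct Hxy as [Hxy|Hyx].
    - apply Hy. exists (S i). rewrite (Eeq _ _ Hxy), Hx. reflexivity.
    - set (p := Nat.iter (k-1) s x).
      assert (Hsp : s p = x).
      { unfold p. change (Nat.iter (S (k-1)) s x = x).
        replace (S (k-1)) with k by lia. rewrite Hx, <- iter_add.
        replace (k + i) with (i + k) by lia. rewrite iter_add, Hv. reflexivity. }
      assert (Hpx : E p x) by (rewrite <- Hsp; apply Es).
      assert (Cp : C p) by (exists (k - 1 + i); unfold p; rewrite Hx, iter_add; reflexivity).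
      assert (Hxy : x <> y) by (intro; subst; apply Hy; exists i; reflexivity).
      assert (Hpy : p <> y) by (intro; subst; apply Hy; exact Cp).
      set (f := fun z => if excluded_middle_informative (z = y) then p else z).
      assert (fy : f y = p) by (unfold f; destruct excluded_middle_informative; congruence).
      assert (fx : f x = x) by (unfold f; destruct excluded_middle_informative; congruence).
      assert (nExy : ~ E x y) by (intro H; apply Hy; exists (S i); rewrite (Eeq _ _ H), Hx; reflexivity).
      assert (nExp : ~ E x p) by (intro H; apply (Hirr x); rewrite (Hanti _ _ H Hpx) at 2; exact H).
      destruct (HC (fun z => z = y \/ z = x) (fun z => z = p \/ z = x) f) as [g [Hg Hgf]].
      + exists [y; x]. intros z [->| ->]; simpl; auto.
      + exists [p; x]. intros z [->| ->]; simpl; auto.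
      + intros a b [->| ->] [->| ->]; try apply rt_refl; apply rt_step;
          repeat split; auto; [left; exact Hyx | right; exact Hyx].
      + intros a b [->| ->] [->| ->]; try apply rt_refl; apply rt_step;
          repeat split; auto; [left; exact Hpx | right; exact Hpx].
      + split; [|split; [|split]].
        * intros a [->| ->]; [rewrite fy|rewrite fx]; auto.
        * intros a a' [->| ->] [->| ->]; rewrite ?fx, ?fy; intros; congruence.
        * intros b [->| ->]; [exists y|exists x]; auto.
        * intros a a' [->| ->] [->| ->]; rewrite ?fx, ?fy; split; intros; try tauto;
            exfalso; first [eapply Hirr; eassumption | apply nExy; assumption | apply nExp; assumption].
      + assert (gx : g x = x) by (rewrite Hgf by auto; exact fx).
        assert (gy : g y = p) by (rewrite Hgf by auto; exact fy).
        assert (gp : g p = p) by (unfold p at 1; rewrite aut_comm, gx by exact Hg; reflexivity).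
        destruct Hg as [Hgi _]. apply Hpy. symmetry. apply Hgi. congruence. }
  exists k, (fun i => Nat.iter i s v). repeat split.
  - exact Hk3.
  - intros i j Hi Hj H. destruct (lt_eq_lt_dec i j) as [[Hij|]|Hij]; auto; exfalso.
    + eapply Hinj0; eauto.
    + eapply Hinj0; eauto.
  - intros w. destruct (Hall w) as [i ->]. exists (i mod k). split.
    + apply Nat.mod_upper_bound; lia.
    + symmetry; apply Hred.
  - intros Hxy. destruct (Hall x) as [i ->]. exists (i mod k). split; [apply Nat.mod_upper_bound; lia|].
    split; [apply Hred|]. rewrite (Eeq _ _ Hxy), <- Hred, (Hred i). reflexivity.
  - intros [i [Hi [-> ->]]]. rewrite <- Hred. apply Es.
Qed.
End Func.

Lemma main_func (V : Type) (E : V -> V -> Prop) (s : V -> V) (x0 : V) :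
  is_digraph E -> connected E -> C_homogeneous E -> (forall x y, E x y <-> y = s x) ->
  (is_tree E /\ @infinite_vertices V) \/ directed_cycle E.
Proof.
  intros [Hirr Hanti] Hconn HC Hs.
  destruct (classic (periodic V s)) as [Hp|Hnp].
  - right. eapply periodic_cycle; eauto.
  - left. split; [split; [exact Hconn|]|].
    + intros l Hl. apply Hnp. eapply cycle_periodic; eauto.
    + intros [L HL].
      assert (Hnd : NoDup (map (fun k => Nat.iter k s x0) (seq 0 (S (length L))))).
      { apply Injective_map_NoDup; [|apply seq_NoDup].
        intros i j H. destruct (lt_eq_lt_dec i j) as [[Hij|]|Hij]; auto; exfalso; apply Hnp.
        - eapply rep_periodic; eauto.
        - eapply rep_periodic; eauto. }
      apply NoDup_incl_length with (l' := L) in Hnd.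
      * rewrite length_map, length_seq in Hnd. lia.
      * intros z _. apply HL; exact I.
Qed.

Lemma vt (V : Type) (E : V -> V -> Prop) :
  is_digraph E -> C_homogeneous E -> forall x y, exists g, automorphism E g /\ g x = y.
Proof.
  intros [Hirr _] HC x y.
  destruct (HC (fun z => z = x) (fun z => z = y) (fun _ => y)) as [g [Hg Hgf]].
  - exists [x]; intros z ->; simpl; auto.
  - exists [y]; intros z ->; simpl; auto.
  - intros a b -> ->; apply rt_refl.
  - intros a b -> ->; apply rt_refl.
  - split; [|split; [|split]].
    + reflexivity.
    + intros a a' -> ->; reflexivity.
    + intros b ->; exists x; auto.
    + intros a a' -> ->; split; intro H; exfalso; eapply Hirr; eassumption.
  - exists g; split; auto.
Qed.

Lemma out_func (V : Type) (E : V -> V -> Prop) (x : V) :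
  is_digraph E -> C_homogeneous E -> singleton_set (out_nbh E x) ->
  exists s, forall a b, E a b <-> b = s a.
Proof.
  intros Hd HC [y0 Hy0].
  assert (H : forall a, exists y, forall z, E a z <-> z = y).
  { intros a. destruct (vt V E Hd HC x a) as [g [[Hgi [Hgs Hge]] <-]].
    exists (g y0). intros z. split.
    - intros H. destruct (Hgs z) as [w <-]. apply (proj2 (Hge _ _)) in H.
      apply (proj1 (Hy0 _)) in H. congruence.
    - intros ->. apply (proj1 (Hge _ _)). apply (proj2 (Hy0 _)). reflexivity. }
  exists (fun a => proj1_sig (constructive_indefinite_description _ (H a))).
  intros a b. exact (proj2_sig (constructive_indefinite_description _ (H a)) b).
Qed.

Definition flipE {V : Type} (E : V -> V -> Prop) := fun a b => E b a.

Lemma adj_flip {V} (E : V -> V -> Prop) a b : adj (flipE E) a b <-> adj E a b.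
Proof. unfold adj, flipE; tauto. Qed.

Lemma crt_mono {A} (R R' : A -> A -> Prop) a b :
  (forall x y, R x y -> R' x y) -> clos_refl_trans A R a b -> clos_refl_trans A R' a b.
Proof.
  intros HR H; induction H; [apply rt_step; auto|apply rt_refl|eapply rt_trans; eauto].
Qed.

Lemma conn_flip {V} (E : V -> V -> Prop) A : connected_in (flipE E) A <-> connected_in E A.
Proof.
  split; intros H a b Ha Hb; eapply crt_mono; try apply (H a b Ha Hb);
  intros u w [? [? Huw]]; repeat split; auto; apply adj_flip; auto.
Qed.

Lemma flip_dig {V} (E : V -> V -> Prop) : is_digraph E -> is_digraph (flipE E).
Proof. intros [H1 H2]; split; unfold flipE; auto. Qed.

Lemma flip_C {V} (E : V -> V -> Prop) : C_homogeneous E -> C_homogeneous (flipE E).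
Proof.
  intros HC A B f HA HB CA CB [i1 [i2 [i3 i4]]].
  destruct (HC A B f HA HB (proj1 (conn_flip E A) CA) (proj1 (conn_flip E B) CB))
    as [g [[g1 [g2 g3]] Hg]].
  - split; [|split; [|split]]; auto. intros a a' Ha Ha'. exact (i4 a' a Ha' Ha).
  - exists g; split; auto. split; [|split]; auto. intros x y. exact (g3 y x).
Qed.

Lemma cycle_flip {V} (E : V -> V -> Prop) l : undirected_cycle E l -> undirected_cycle (flipE E) l.
Proof.
  intros [h1 [h2 [h3 [u [w [h4 [h5 h6]]]]]]]. split; [|split; [|split]]; auto.
  - intros i Hi. destruct (h3 i Hi) as [u' [w' [? [? ?]]]]. exists u', w'.
    repeat split; auto. apply adj_flip; auto.
  - exists u, w. repeat split; auto. apply adj_flip; auto.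
Qed.

Lemma dcycle_flip {V} (E : V -> V -> Prop) : directed_cycle (flipE E) -> directed_cycle E.
Proof.
  intros [n [f [Hn [Hi [Hsu He]]]]].
  assert (Hmod : forall i, i < n - 1 -> S i mod n = S i) by (intros; apply Nat.mod_small; lia).
  assert (Hlast : S (n-1) mod n = 0).
  { replace (S (n-1)) with n by lia. apply Nat.Div0.mod_same. }
  exists n, (fun i => f (n - 1 - i)). split; [|split; [|split]]; auto.
  - intros i j Hi' Hj' H. apply Hi in H; lia.
  - intros v. destruct (Hsu v) as [i [Hi' <-]]. exists (n - 1 - i). split; [lia|]. f_equal; lia.
  - intros x y. split.
    + intros Hxy. destruct (proj1 (He y x) Hxy) as [i [Hi' [-> ->]]].
      destruct (Nat.eq_dec i (n-1)) as [->|Hne].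
      * exists (n-1). split; [lia|]. rewrite Hlast. split; f_equal; lia.
      * exists (n - 2 - i). split; [lia|]. rewrite Hmod by lia. rewrite Hmod by lia.
        split; f_equal; lia.
    + intros [j [Hj [-> ->]]]. apply (He _ _). unfold flipE.
      destruct (Nat.eq_dec j (n-1)) as [->|Hne].
      * exists (n-1). split; [lia|]. rewrite Hlast. split; f_equal; lia.
      * exists (n - 2 - j). split; [lia|]. rewrite (Hmod j) by lia. rewrite Hmod by lia.
        split; f_equal; lia.
Qed.

Theorem lemma4p1 (V : Type) (E : V -> V -> Prop) (x : V) :
  is_digraph E -> locally_finite E -> connected E -> C_homogeneous E ->
  (singleton_set (out_nbh E x) \/ singleton_set (in_nbh E x)) ->
  (is_tree E /\ @infinite_vertices V) \/ directed_cycle E.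
Proof.
  intros Hd _ Hc HC [Ho|Hi].
  - destruct (out_func V E x Hd HC Ho) as [s Hs]. eapply main_func; eauto.
  - destruct (out_func V (flipE E) x (flip_dig E Hd) (flip_C E HC) Hi) as [s Hs].
    destruct (main_func V (flipE E) s x (flip_dig E Hd) (proj2 (conn_flip E _) Hc)
                (flip_C E HC) Hs) as [[[Hc' Ht] Hinf]|Hcy].
    + left. split; auto. split; auto. intros l Hl. apply (Ht l), cycle_flip, Hl.
    + right. apply dcycle_flip, Hcy.
Qed.
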